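(* Let $\mathbb{K}$ be a field of characteristic $0$, let $V$ be a $\mathbb{K}$-vector space of dimension $n\ge d$, and let $\mathcal{P}_d$ be a homogeneous polynomial functor of degree $d$. Then the functor $\Omega_{V,d}(\mathcal{P}_d):\mathbf{Vec}\to\mathbf{Vec}$ is a homogeneous polynomial functor of degree $d$.
   Context: $\mathbf{Vec}$ is the category of finite-dimensional $\mathbb{K}$-spaces. A functor $\mathcal{P}:\mathbf{Vec}\to\mathbf{Vec}$ is a polynomial functor if each map $\operatorname{Hom}(X,Y)\to\operatorname{Hom}(\mathcal{P}(X),\mathcal{P}(Y))$ is polynomial, homogeneous of degree $d$ if $\mathcal{P}(\lambda h)=\lambda^d\mathcal{P}(h)$. Definition: $\Omega_{V,d}(\mathcal{P}_d)(W)=\operatorname{Hom}_{\mathrm{GL}(V)}\bigl(\bigwedge^dV,\mathcal{P}_d(W\otimes V)\bigr)$, where $\mathrm{GL}(V)$ acts on $W\otimes V$ by $g\mapsto\mathrm{id}_W\otimes g$ and on $\mathcal{P}_d(W\otimes V)$ through $\mathcal{P}_d$; a linear map $h:W\to W'$ is sent to post-composition with $\mathcal{P}_d(h\otimes\mathrm{id}_V)$. (I.e. $\Omega_{V,d}(\mathcal{P}_d)=\mathcal{H}_{V,d}\circ\mathcal{P}_{V,d}\circ\mathcal{T}_V$ with $\mathcal{T}_V=-\otimes V$ and $\mathcal{H}_{V,d}=\operatorname{Hom}_{\mathrm{GL}(V)}(\bigwedge^dV,-)$.) *)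

(* Defs.v *)
From HB Require Import structures.
From mathcomp Require Import all_boot all_order all_algebra.
From mathcomp Require Import mpoly.
From Stdlib Require Import ClassicalEpsilon.
Set Implicit Arguments. Unset Strict Implicit. Unset Printing Implicit Defensive.
Import Order.TTheory GRing.Theory.
Local Open Scope ring_scope.

Section Defs.
Variable K : fieldType.

Definition crd (U : vectType K) (u : U) : 'rV[K]_(\dim (@fullv K U)) :=
  \row_i coord (vbasis fullv) i u.

(* matrix of a linear map (row-vector convention): crd (h u) = crd u *m hmx h *)
Definition hmx (U W : vectType K) (h : 'Hom(U, W))
  : 'M[K]_(\dim (@fullv K U), \dim (@fullv K W)) :=
  \matrix_(i, j) coord (vbasis fullv) j (h (tnth (vbasis fullv) i)).

Definition is_poly_map (U W : vectType K) (f : U -> W) : Prop :=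
  exists p : 'I_(\dim (@fullv K W)) -> {mpoly K[\dim (@fullv K U)]},
    forall u j, coord (vbasis fullv) j (f u) = (p j).@[fun i => coord (vbasis fullv) i u].

Definition is_hpoly_functor (d : nat) (F : vectType K -> vectType K)
  (Fh : forall U W : vectType K, 'Hom(U, W) -> 'Hom(F U, F W)) : Prop :=
  [/\ (forall U : vectType K, Fh U U \1%VF = \1%VF),
      (forall (U W X : vectType K) (g : 'Hom(W, X)) (h : 'Hom(U, W)),
          Fh U X (g \o h)%VF = (Fh W X g \o Fh U W h)%VF),
      (forall U W : vectType K, is_poly_map (Fh U W)) &
      (forall (U W : vectType K) (a : K) (h : 'Hom(U, W)),
          Fh U W (a *: h) = a ^+ d *: Fh U W h)].

(* Tensor product W (x) V, modelled as coefficient matrices with respect to the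
   canonical bases: M represents sum_{i,j} M i j * w_i (x) v_j. *)
Definition tens (W V : vectType K) : vectType K :=
  'M[K]_(\dim (@fullv K W), \dim (@fullv K V)).

Definition tmap (W W' V V' : vectType K) (h : 'Hom(W, W')) (k : 'Hom(V, V'))
  : 'Hom(tens W V, tens W' V') :=
  linfun (fun M : tens W V => ((hmx h)^T *m M *m hmx k : tens W' V')).

(* d-element subsets of 'I_n, indexing the standard basis
   e_A = v_{a_1} /\ ... /\ v_{a_d} (a_1 < ... < a_d) of /\^d K^n *)
Definition dsub (n d : nat) := {A : {set 'I_n} | #|A| == d}.

(* the exterior power /\^d V, coordinates in the basis (e_A)_A *)
Definition Ext (n d : nat) : vectType K := {ffun dsub n d -> K^o}.

Definition mx_nat (n : nat) (G : 'M[K]_n) (p q : nat) : K :=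
  match (insub p : option 'I_n), (insub q : option 'I_n) with
  | Some i, Some j => G i j
  | _, _ => 0
  end.

Definition sidx (n d : nat) (A : dsub n d) (i : nat) : nat :=
  nth 0%N (map val (enum (val A))) i.

Definition minor (n d : nat) (G : 'M[K]_n) (A B : dsub n d) : 'M[K]_d :=
  \matrix_(i, j) mx_nat G (sidx A i) (sidx B j).

(* /\^d g for g with matrix G : g v_i = sum_j G i j v_j, so
   (/\^d g) e_A = sum_B det (minor G A B) e_B *)
Definition extmx (n d : nat) (G : 'M[K]_n) : 'End(Ext n d) :=
  linfun (fun x : Ext n d =>
    ([ffun B => \sum_A (x A : K) * \det (minor G A B)] : Ext n d)).

Definition extmap (V : vectType K) (d : nat) (g : 'End(V))
  : 'End(Ext (\dim (@fullv K V)) d) := extmx d (hmx g).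

Section Omega.
Variables (V : vectType K) (d : nat) (F : vectType K -> vectType K)
  (Fh : forall U W : vectType K, 'Hom(U, W) -> 'Hom(F U, F W)).

Definition ExtV : vectType K := Ext (\dim (@fullv K V)) d.

(* GL(V)-equivariance of phi : /\^d V -> P(W (x) V), GL(V) acting on W (x) V by
   id_W (x) g and on P(W (x) V) through P *)
Definition is_GL_equivariant (W : vectType K) (phi : 'Hom(ExtV, F (tens W V))) : Prop :=
  forall g : 'End(V), lker g == 0%VS ->
    (phi \o extmap d g)%VF = (Fh (tmap \1%VF g) \o phi)%VF.

(* the subspace Hom_{GL(V)}(/\^d V, P(W (x) V)) (chosen classically as the
   subspace whose elements are exactly the equivariant maps) *)
Definition OmegaSp (W : vectType K) : {vspace 'Hom(ExtV, F (tens W V))} :=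
  epsilon (inhabits 0%VS)
    (fun S => forall phi, phi \in S <-> is_GL_equivariant phi).

Definition Omega_obj (W : vectType K) : vectType K := subvs_of (OmegaSp W).

Definition postc (W W' : vectType K) (h : 'Hom(W, W'))
  (phi : 'Hom(ExtV, F (tens W V))) : 'Hom(ExtV, F (tens W' V)) :=
  (Fh (tmap h \1%VF) \o phi)%VF.

Definition Omega_hom (W W' : vectType K) (h : 'Hom(W, W'))
  : 'Hom(Omega_obj W, Omega_obj W') :=
  linfun (fun x : Omega_obj W =>
    (vsproj (OmegaSp W') (postc h (vsval x)) : Omega_obj W')).

End Omega.
End Defs.

(* Main.v *)
Require Import Defs.
From HB Require Import structures.
From mathcomp Require Import all_boot all_order all_algebra.
From mathcomp Require Import mpoly.
From Stdlib Require Import ClassicalEpsilon Classical FunctionalExtensionality.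
Set Implicit Arguments. Unset Strict Implicit. Unset Printing Implicit Defensive.
Import GRing.Theory.
Local Open Scope ring_scope.

Section Helpers.
Variable K : fieldType.

Lemma linfunE' (aT rT : vectType K) (f : aT -> rT) (hf : linear f) :
  linfun f =1 f.
Proof.
move=> v.
pose g : {linear aT -> rT} := HB.pack f (GRing.isLinear.Build _ _ _ _ f hf).
exact: (lfunE g v).
Qed.

Lemma lin_poly (U W : vectType K) (f : U -> W) :
  (forall a u v, f (a *: u + v) = a *: f u + f v) -> is_poly_map f.
Proof.
move=> hf.
have f0 : f 0 = 0.
  have h := hf 1 0 0; rewrite !scale1r addr0 in h.
  by apply: (addrI (f 0)); rewrite addr0 -h.
have fD : {morph f : x y / x + y}.
  by move=> x y; rewrite -{1}(scale1r x) hf scale1r.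
have fZ : forall a u, f (a *: u) = a *: f u.
  by move=> a u; rewrite -(addr0 (a *: u)) hf f0 addr0.
exists (fun j => \sum_(i < \dim (@fullv K U))
   (coord (vbasis fullv) j (f (vbasis fullv)`_i)) *: 'X_i).
move=> u j.
rewrite {1}(coord_vbasis (memvf u)).
rewrite (big_morph f fD f0) linear_sum.
rewrite (big_morph _ (@mevalD _ _ _) (@meval0 _ _ _)).
apply: eq_bigr => i _.
by rewrite fZ linearZ /= mevalZ mevalXU mulrC.
Qed.

Lemma comp_poly (U W X : vectType K) (f : U -> W) (g : W -> X) :
  is_poly_map f -> is_poly_map g -> is_poly_map (g \o f).
Proof.
move=> [p hp] [q hq].
exists (fun j => q j \mPo [tuple p i | i < \dim (@fullv K W)]).
move=> u j /=.
rewrite comp_mpoly_meval hq.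
congr (meval _ _); apply: functional_extensionality => i.
by rewrite tnth_mktuple hp.
Qed.

Lemma exists_vspace (vT : vectType K) (P : vT -> Prop) :
  P 0 -> (forall a u v, P u -> P v -> P (a *: u + v)) ->
  exists S : {vspace vT}, forall v, v \in S <-> P v.
Proof.
move=> P0 PL.
apply: NNPP => H.
have claim : forall k, exists U : {vspace vT},
    (forall v, v \in U -> P v) /\ (k <= \dim U)%N.
  elim=> [|k [U [HU Hk]]].
    by exists 0%VS; split=> // v; rewrite memv0 => /eqP ->.
  have [v [Pv vU]] : exists v, P v /\ v \notin U.
    apply: NNPP => H2; apply: H; exists U => v; split; first exact: HU.
    move=> Pv; case: (boolP (v \in U)) => // vU.
    by exfalso; apply: H2; exists v.
  exists (U + <[v]>)%VS; split.
    move=> w /memv_addP [u uU [x /vlineP [c ->] ->]].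
    by rewrite addrC; apply: PL => //; apply: HU.
  have sub : (U <= U + <[v]>)%VS by apply: addvSl.
  have := ltn_leqif (dimv_leqif_eq sub).
  have -> : (U == U + <[v]>)%VS = false.
    apply/negP => /eqP E; move: vU; rewrite E.
    by move/negP; apply; apply: subvP (addvSr U _) _ (memv_line v).
  move=> /= lt; exact: leq_ltn_trans Hk lt.
have [U [_ HU]] := claim (\dim (@fullv K vT)).+1.
have := dimvS (subvf U).
by rewrite leqNgt HU.
Qed.


Lemma free_vb (U : vectType K) : free (vbasis (@fullv K U)).
Proof. exact: basis_free (vbasisP fullv). Qed.

Lemma hmx1 (U : vectType K) : hmx (\1%VF : 'End(U)) = 1%:M.
Proof.
apply/matrixP => i j; rewrite !mxE id_lfunE (tnth_nth 0) coord_free //.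
exact: free_vb.
Qed.

Lemma hmxM (U W X : vectType K) (g : 'Hom(W, X)) (h : 'Hom(U, W)) :
  hmx (g \o h)%VF = hmx h *m hmx g.
Proof.
apply/matrixP => i j; rewrite !mxE comp_lfunE.
rewrite {1}(coord_vbasis (memvf (h (tnth (vbasis fullv) i)))).
rewrite linear_sum linear_sum /=.
apply: eq_bigr => k _; rewrite !mxE linearZ linearZ /= !(tnth_nth 0).
reflexivity.
Qed.

Lemma hmxL (U W : vectType K) (a : K) (h h' : 'Hom(U, W)) :
  hmx (a *: h + h') = a *: hmx h + hmx h'.
Proof.
by apply/matrixP => i j; rewrite !mxE add_lfunE scale_lfunE linearP.
Qed.

Lemma tmapE (W W' X X' : vectType K) (h : 'Hom(W, W')) (k : 'Hom(X, X')) M :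
  tmap h k M = (hmx h)^T *m M *m hmx k.
Proof.
rewrite /tmap linfunE' // => a x y.
by rewrite mulmxDr mulmxDl -scalemxAr -scalemxAl.
Qed.

Lemma tmap11 (W X : vectType K) :
  tmap (\1%VF : 'End(W)) (\1%VF : 'End(X)) = \1%VF.
Proof.
by apply/lfunP => M; rewrite tmapE !hmx1 trmx1 mul1mx mulmx1 id_lfunE.
Qed.

Lemma tmapM (W W' W'' X : vectType K) (g : 'Hom(W', W'')) (h : 'Hom(W, W')) :
  tmap (g \o h)%VF (\1%VF : 'End(X)) = (tmap g \1 \o tmap h \1)%VF.
Proof.
apply/lfunP => M; rewrite comp_lfunE !tmapE hmxM !hmx1 !mulmx1 trmx_mul.
by rewrite mulmxA.
Qed.

Lemma tmapL (W W' X : vectType K) (a : K) (h h' : 'Hom(W, W')) :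
  tmap (a *: h + h') (\1%VF : 'End(X)) = a *: tmap h \1 + tmap h' \1.
Proof.
apply/lfunP => M; rewrite add_lfunE scale_lfunE !tmapE hmxL linearD linearZ /=.
by rewrite !mulmxDl !scalemxAl.
Qed.

Lemma tmapZ (W W' X : vectType K) (a : K) (h : 'Hom(W, W')) :
  tmap (a *: h) (\1%VF : 'End(X)) = a *: tmap h \1.
Proof.
apply/lfunP => M; rewrite scale_lfunE !tmapE.
have -> : hmx (a *: h) = a *: hmx h.
  by apply/matrixP => i j; rewrite !mxE scale_lfunE linearZ.
by rewrite linearZ /= !scalemxAl.
Qed.

Lemma tmap_comm (W W' X X' : vectType K) (h : 'Hom(W, W')) (g : 'Hom(X, X')) :
  (tmap h \1 \o tmap \1 g)%VF = (tmap \1 g \o tmap h \1)%VF.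
Proof.
apply/lfunP => M; rewrite !comp_lfunE !tmapE !hmx1 !trmx1 !mulmx1 !mul1mx.
by rewrite !mulmxA.
Qed.


Section Main.
Variables (V : vectType K) (d : nat) (F : vectType K -> vectType K)
  (Fh : forall U W : vectType K, 'Hom(U, W) -> 'Hom(F U, F W)).
Hypothesis HF : is_hpoly_functor d Fh.

Lemma Fh_id U : @Fh U U \1%VF = \1%VF.
Proof. by case: HF. Qed.
Lemma Fh_comp (U W X : vectType K) (g : 'Hom(W, X)) (h : 'Hom(U, W)) :
  @Fh U X (g \o h)%VF = (@Fh W X g \o @Fh U W h)%VF.
Proof. by case: HF. Qed.
Lemma Fh_poly (U W : vectType K) : is_poly_map (@Fh U W).
Proof. by case: HF. Qed.
Lemma Fh_hom (U W : vectType K) a (h : 'Hom(U, W)) : @Fh U W (a *: h) = a ^+ d *: @Fh U W h.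
Proof. by case: HF. Qed.

Lemma postc_equiv (W W' : vectType K) (h : 'Hom(W, W'))
  (phi : 'Hom(ExtV V d, F (tens W V))) :
  is_GL_equivariant Fh phi -> is_GL_equivariant Fh (postc Fh h phi).
Proof.
move=> Hphi g Hg; rewrite /postc -comp_lfunA (Hphi g Hg) !comp_lfunA.
by rewrite -!Fh_comp tmap_comm.
Qed.

Lemma OmegaSpE (W : vectType K) phi :
  phi \in OmegaSp V d Fh W <-> is_GL_equivariant Fh phi.
Proof.
rewrite /OmegaSp.
apply: (epsilon_spec (inhabits 0%VS)
  (fun S => forall phi, phi \in S <-> is_GL_equivariant Fh phi)).
apply: exists_vspace.
  by move=> g _; rewrite comp_lfun0l comp_lfun0r.
move=> a u v Hu Hv g Hg.
by rewrite comp_lfunDl -comp_lfunZl comp_lfunDr -comp_lfunZr (Hu g Hg) (Hv g Hg).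
Qed.

Definition LL (W W' : vectType K) (psi : 'Hom(F (tens W V), F (tens W' V)))
  : 'Hom(Omega_obj V d Fh W, Omega_obj V d Fh W') :=
  linfun (fun x : Omega_obj V d Fh W =>
    (vsproj (OmegaSp V d Fh W') (psi \o vsval x)%VF : Omega_obj V d Fh W')).

Lemma LLE (W W' : vectType K) psi x :
  @LL W W' psi x = vsproj (OmegaSp V d Fh W') (psi \o vsval x)%VF.
Proof.
rewrite /LL linfunE' // => a y z.
by rewrite linearP /= comp_lfunDr -comp_lfunZr linearP.
Qed.

Lemma Omega_homE (W W' : vectType K) (h : 'Hom(W, W')) :
  Omega_hom V d Fh h = LL (Fh (tmap h \1%VF)).
Proof.
by apply/lfunP => x; rewrite LLE.
Qed.

Lemma LL_lin (W W' : vectType K) a psi psi' :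
  @LL W W' (a *: psi + psi') = a *: LL psi + LL psi'.
Proof.
apply/lfunP => x; rewrite add_lfunE scale_lfunE !LLE.
by rewrite comp_lfunDl -comp_lfunZl linearP.
Qed.

Lemma LL_Z (W W' : vectType K) a psi :
  @LL W W' (a *: psi) = a *: LL psi.
Proof.
apply/lfunP => x; rewrite scale_lfunE !LLE.
by rewrite -comp_lfunZl linearZ.
Qed.

Lemma Omega_functor : is_hpoly_functor d (Omega_hom V d Fh).
Proof.
split.
- move=> W; apply/lfunP => x.
  by rewrite Omega_homE LLE tmap11 Fh_id comp_lfun1l vsvalK id_lfunE.
- move=> U W X g h; apply/lfunP => x.
  rewrite comp_lfunE !Omega_homE !LLE tmapM Fh_comp -comp_lfunA.
  rewrite vsprojK //.
  apply/OmegaSpE; apply: (postc_equiv h).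
  by apply/OmegaSpE; apply: subvsP.
- move=> W W'.
  have P1 : is_poly_map (fun h : 'Hom(W, W') => tmap h (\1%VF : 'End(V))).
    by apply: lin_poly => a u v; exact: tmapL.
  have P2 := comp_poly P1 (@Fh_poly _ _).
  have P3 := comp_poly P2 (lin_poly (@LL_lin W W')).
  exact: P3.
- move=> W W' a h.
  by rewrite !Omega_homE tmapZ Fh_hom LL_Z.
Qed.

End Main.
End Helpers.

Theorem mainTheorem9 (K : fieldType) (charK0 : [pchar K] =i pred0)
  (V : vectType K) (d : nat) (hnd : (d <= \dim (@fullv K V))%N)
  (F : vectType K -> vectType K)
  (Fh : forall U W : vectType K, 'Hom(U, W) -> 'Hom(F U, F W)) :
  is_hpoly_functor d Fh ->
  (forall (W W' : vectType K) (h : 'Hom(W, W'))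
          (phi : 'Hom(ExtV V d, F (tens W V))),
      is_GL_equivariant Fh phi -> is_GL_equivariant Fh (postc Fh h phi))
  /\ is_hpoly_functor d (Omega_hom V d Fh).
Proof.
move=> HF; split.
  by move=> W W' h phi; apply: postc_equiv.
exact: Omega_functor.
Qed.
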